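(* Let $\sigma$ be an erasing $k$-block substitution with $w_\epsilon\ne1^k$ that satisfies the optimality condition. Then the point $x_0=0.w_\epsilon^\infty$ is an almost fixed point of $f_\sigma$.
   Context: Notation: $\mathbb I=[0,1]$. $\{0,1\}^*$ and $\{0,1\}^\omega$ denote finite and infinite binary words, and $\epsilon$ is the empty word. For a word $w$, set $0.w=\sum_iw_i2^{-i}$. For $x\in(0,1]$, $\widetilde x$ is the unique infinite binary expansion of $x$ not ending in $0^\infty$. Fix $k\ge2$. An erasing $k$-block substitution is a map $\sigma:\{0,1\}^k\to\{0,1\}^*$ with exactly one block $w_\epsilon$ such that $\sigma(w_\epsilon)=\epsilon$. It acts blockwise on infinite words, concatenating the images of consecutive $k$-blocks. The map $f_\sigma:\mathbb I\to\mathbb I$ is defined by $f_\sigma(x)=0.\sigma(\widetilde x)$ if $x\in(0,1]$ and $\widetilde x\neq w_\epsilon^\infty$, and $f_\sigma(x)=0$ otherwise. Optimality condition: every $w\in\{0,1\}^\omega$ can be written as $w=\prod_{i\ge1}\sigma(b_i)$ with blocks $b_i\in\{0,1\}^k$ satisfying $\sigma(b_i)\ne\epsilon$. Almost fixed point: for $f:\mathbb I\to\mathbb I$ and $x\in\mathbb I$, set $R^-(f,x)=\{y:f^{-1}(y)\cap(x-\varepsilon,x)\ne\emptyset\ \forall\varepsilon>0\}$ and $R^+(f,x)=\{y:f^{-1}(y)\cap(x,x+\varepsilon)\ne\emptyset\ \forall\varepsilon>0\}$. The point $x$ is an almost fixed point of $f$ if $x$ belongs to the interior (in $\mathbb I$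 with its usual topology) of $R^-(f,x)$ or of $R^+(f,x)$. *)

(* Defs.v *)
From Stdlib Require Import Reals Lra List Arith ClassicalEpsilon ClassicalDescription.
From Coquelicot Require Import Coquelicot.
Import ListNotations.
Open Scope R_scope.

(* Finite binary words are [list bool]; infinite binary words are [nat -> bool]
   (bit i of the word is the (i+1)-th letter, i.e. index shifted by one). *)

(* 0.w for a finite word w = sum_i w_i 2^{-i} (i starting at 1). *)
Fixpoint fval (w : list bool) : R :=
  match w with
  | [] => 0
  | b :: w' => (if b then / 2 else 0) + / 2 * fval w'
  end.

Definition ival (w : nat -> bool) : R :=
  Series (fun i => if w i then (/ 2) ^ (S i) else 0).

Definition not_ending_in_zeros (w : nat -> bool) : Prop :=
  forall n, exists m, (n <= m)%nat /\ w m = true.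

(* tilde x : the (unique, for x in (0,1]) infinite binary expansion of x
   not ending in 0^infinity. *)
Definition tilde (x : R) : nat -> bool :=
  epsilon (inhabits (fun _ => false))
    (fun w => ival w = x /\ not_ending_in_zeros w).

(* the i-th k-block (i starting at 0) of an infinite word *)
Definition block (k : nat) (w : nat -> bool) (i : nat) : list bool :=
  map (fun j => w (i * k + j)%nat) (seq 0 k).

Definition iper (u : list bool) : nat -> bool :=
  fun n => nth (n mod length u) u false.

Definition sub_prefix (sigma : list bool -> list bool) (k : nat)
  (w : nat -> bool) (n : nat) : list bool :=
  concat (map (fun i => sigma (block k w i)) (seq 0 n)).

(* 0.sigma(w): the binary value of the (finite or infinite) concatenation
   sigma(b_1) sigma(b_2) ..., computed as the limit of the values of its
   finite prefixes sigma(b_1)...sigma(b_n). *)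
Definition sub_val (sigma : list bool -> list bool) (k : nat)
  (w : nat -> bool) : R :=
  real (Lim_seq (fun n => fval (sub_prefix sigma k w n))).

Definition erasing_subst (k : nat) (sigma : list bool -> list bool)
  (weps : list bool) : Prop :=
  length weps = k /\ sigma weps = [] /\
  (forall b, length b = k -> sigma b = [] -> b = weps).

Definition optimal (k : nat) (sigma : list bool -> list bool) : Prop :=
  forall w : nat -> bool, exists bs : nat -> list bool,
    (forall i, length (bs i) = k /\ sigma (bs i) <> []) /\
    (forall n, let p := concat (map (fun i => sigma (bs i)) (seq 0 n)) in
               p = map w (seq 0 (length p))).

(* the map f_sigma : I -> I (extended by 0 outside I, irrelevant) *)
Definition f_sigma (k : nat) (sigma : list bool -> list bool)
  (weps : list bool) (x : R) : R :=
  if excluded_middle_informative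
       (0 < x <= 1 /\ tilde x <> iper weps)
  then sub_val sigma k (tilde x)
  else 0.

Definition Rminus_set (f : R -> R) (x y : R) : Prop :=
  forall eps, 0 < eps ->
    exists x', 0 <= x' <= 1 /\ x - eps < x' < x /\ f x' = y.

Definition Rplus_set (f : R -> R) (x y : R) : Prop :=
  forall eps, 0 < eps ->
    exists x', 0 <= x' <= 1 /\ x < x' < x + eps /\ f x' = y.

Definition in_interior_I (S : R -> Prop) (x : R) : Prop :=
  0 <= x <= 1 /\ exists delta, 0 < delta /\
    forall y, 0 <= y <= 1 -> Rabs (y - x) < delta -> S y.

Definition almost_fixed_point (f : R -> R) (x : R) : Prop :=
  in_interior_I (Rminus_set f x) x \/ in_interior_I (Rplus_set f x) x.

(* Main.v *)
Require Import Defs.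
From Stdlib Require Import Reals List Lra Lia Arith ClassicalEpsilon FunctionalExtensionality Classical.
From Coquelicot Require Import Coquelicot.
Import ListNotations.
Open Scope R_scope.

Definition term (w : nat -> bool) (i : nat) : R := if w i then (/ 2) ^ (S i) else 0.
Definition tl (w : nat -> bool) : nat -> bool := fun i => w (S i).
Definition nez := not_ending_in_zeros.

Lemma half_pow_pos n : 0 < (/2)^n.
Proof. apply pow_lt; lra. Qed.

Lemma term_bound w i : 0 <= term w i <= (/2)^(S i).
Proof. unfold term; destruct (w i); pose proof (half_pow_pos (S i)); lra. Qed.

Lemma is_series_unique_aux : is_series (fun i => (/2)^(S i)) 1.
Proof.
  assert (H := is_series_scal_l (/2) _ _ (is_series_geom (/2) ltac:(rewrite Rabs_pos_eq; lra))).
  apply (is_series_ext _ _ _ (fun n => eq_refl)) in H.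
  replace 1 with (scal (/2) (/(1 - /2))).
  - eapply is_series_ext; [|exact H]. intros n; simpl. unfold scal; simpl; unfold mult; simpl. ring.
  - unfold scal; simpl; unfold mult; simpl. field.
Qed.

Lemma ex_geom1 : ex_series (fun i => (/2)^(S i)).
Proof.
  exists 1. apply is_series_unique_aux.
Qed.

Lemma Series_geom1 : Series (fun i => (/2)^(S i)) = 1.
Proof.
  apply is_series_unique, is_series_unique_aux.
Qed.

Lemma ex_term w : ex_series (term w).
Proof.
  apply (@ex_series_le R_AbsRing R_CompleteNormedModule _ (fun i => (/2)^(S i))); [|apply ex_geom1].
  intros n. change (norm (term w n)) with (Rabs (term w n)).
  pose proof (term_bound w n). rewrite Rabs_pos_eq; lra.
Qed.

Lemma ival_bounds w : 0 <= ival w <= 1.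
Proof.
  unfold ival. fold (term w). split.
  - replace 0 with (Series (fun n => 0 * term w n)).
    + apply Series_le. intros; pose proof (term_bound w n); lra.
      apply ex_term.
    + rewrite Series_scal_l; ring.
  - rewrite <- Series_geom1. apply Series_le; [apply term_bound|apply ex_geom1].
Qed.

Lemma ival_step w : ival w = (if w 0%nat then /2 else 0) + /2 * ival (tl w).
Proof.
  unfold ival. fold (term w). fold (term (tl w)).
  rewrite Series_incr_1 by apply ex_term.
  rewrite <- Series_scal_l. f_equal.
  - unfold term; destruct (w 0%nat); simpl; ring.
  - apply Series_ext. intros n; unfold term, tl. destruct (w (S n)); simpl; ring.
Qed.

Lemma ival_ext w1 w2 : (forall i, w1 i = w2 i) -> ival w1 = ival w2.
Proof. intros H; unfold ival; apply Series_ext; intros; rewrite H; auto. Qed.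

Lemma ival_zero w : (forall i, w i = false) -> ival w = 0.
Proof.
  intros H. unfold ival. rewrite (Series_ext _ (fun n => 0 * 1)).
  - rewrite (Series_scal_l 0 (fun _ => 1)). ring.
  - intros n; rewrite H; ring.
Qed.

Lemma nez_tl w : nez w -> nez (tl w).
Proof.
  intros H n. destruct (H (S n)) as [m [Hm Hw]].
  exists (pred m). unfold tl. split; [lia|]. replace (S (pred m)) with m by lia; auto.
Qed.

Lemma ival_pos_at m : forall w, w m = true -> 0 < ival w.
Proof.
  induction m; intros w H; rewrite ival_step.
  - rewrite H. pose proof (ival_bounds (tl w)); lra.
  - specialize (IHm (tl w) H). destruct (w 0%nat); lra.
Qed.

Lemma ival_pos w : nez w -> 0 < ival w.
Proof. intros H. destruct (H 0%nat) as [m [_ Hm]]. eapply ival_pos_at; eauto. Qed.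

Lemma ival_lt1 m : forall w, w m = false -> ival w < 1.
Proof.
  induction m; intros w H; rewrite ival_step.
  - rewrite H. pose proof (ival_bounds (tl w)); lra.
  - specialize (IHm (tl w) H). destruct (w 0%nat); lra.
Qed.

Lemma ival_close m : forall w1 w2, (forall i, (i < m)%nat -> w1 i = w2 i) ->
  Rabs (ival w1 - ival w2) <= (/2)^m.
Proof.
  induction m; intros w1 w2 H.
  - pose proof (ival_bounds w1); pose proof (ival_bounds w2); simpl.
    apply Rabs_le; lra.
  - rewrite (ival_step w1), (ival_step w2). rewrite (H 0%nat) by lia.
    assert (Hr := IHm (tl w1) (tl w2) ltac:(intros i Hi; unfold tl; apply H; lia)).
    replace ((if w2 0%nat then / 2 else 0) + / 2 * ival (tl w1) -
      ((if w2 0%nat then / 2 else 0) + / 2 * ival (tl w2))) with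
      (/2 * (ival (tl w1) - ival (tl w2))) by ring.
    rewrite Rabs_mult, Rabs_pos_eq by lra. simpl. lra.
Qed.

Lemma ival_cmp m : forall w1 w2, (forall i, (i < m)%nat -> w1 i = w2 i) ->
  w1 m = true -> w2 m = false -> ival w2 <= ival w1.
Proof.
  induction m; intros w1 w2 H H1 H2.
  - rewrite (ival_step w1), (ival_step w2), H1, H2.
    pose proof (ival_bounds (tl w1)); pose proof (ival_bounds (tl w2)); lra.
  - rewrite (ival_step w1), (ival_step w2). rewrite (H 0%nat) by lia.
    assert (Hr := IHm (tl w1) (tl w2) ltac:(intros i Hi; unfold tl; apply H; lia) H1 H2).
    lra.
Qed.

Lemma ival_inj m : forall w1 w2, w1 m <> w2 m -> nez w1 -> nez w2 -> ival w1 <> ival w2.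
Proof.
  induction m; intros w1 w2 H N1 N2.
  - rewrite (ival_step w1), (ival_step w2).
    pose proof (ival_pos _ (nez_tl _ N1)); pose proof (ival_pos _ (nez_tl _ N2)).
    pose proof (ival_bounds (tl w1)); pose proof (ival_bounds (tl w2)).
    destruct (w1 0%nat), (w2 0%nat); try congruence; lra.
  - rewrite (ival_step w1), (ival_step w2).
    destruct (Bool.bool_dec (w1 0%nat) (w2 0%nat)) as [E|E].
    + rewrite E. intro C. apply (IHm (tl w1) (tl w2) H (nez_tl _ N1) (nez_tl _ N2)). lra.
    + pose proof (ival_pos _ (nez_tl _ N1)); pose proof (ival_pos _ (nez_tl _ N2)).
      pose proof (ival_bounds (tl w1)); pose proof (ival_bounds (tl w2)).
      destruct (w1 0%nat), (w2 0%nat); try congruence; lra.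
Qed.

Lemma tilde_eq w : nez w -> tilde (ival w) = w.
Proof.
  intros N. unfold tilde.
  destruct (epsilon_spec (inhabits (fun _ : nat => false))
    (fun w' => ival w' = ival w /\ not_ending_in_zeros w') (ex_intro _ w (conj eq_refl N)))
    as [E N'].
  apply functional_extensionality. intros m.
  destruct (Bool.bool_dec (epsilon (inhabits (fun _ : nat => false))
    (fun w' => ival w' = ival w /\ not_ending_in_zeros w') m) (w m)); auto.
  exfalso. eapply ival_inj; eauto.
Qed.
Definition shiftn (L : nat) (w : nat -> bool) : nat -> bool := fun i => w (L + i)%nat.

Lemma map_seq0S (w : nat -> bool) L : map w (seq 0 (S L)) = w 0%nat :: map (tl w) (seq 0 L).
Proof. simpl. f_equal. rewrite <- seq_shift, map_map. reflexivity. Qed.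

Lemma ival_prefix L : forall w, ival w = fval (map w (seq 0 L)) + (/2)^L * ival (shiftn L w).
Proof.
  induction L; intros w.
  - simpl. rewrite Rmult_1_l, Rplus_0_l. apply ival_ext; intros; reflexivity.
  - rewrite map_seq0S. simpl fval. rewrite (ival_step w), (IHL (tl w)).
    rewrite (ival_ext (shiftn (S L) w) (shiftn L (tl w))) by (intros; reflexivity).
    simpl pow. destruct (w 0%nat); ring.
Qed.

Lemma ival_prefix_bound L w : 0 <= ival w - fval (map w (seq 0 L)) <= (/2)^L.
Proof.
  pose proof (ival_prefix L w) as E. pose proof (ival_bounds (shiftn L w)).
  pose proof (half_pow_pos L).
  assert (0 <= (/2)^L * ival (shiftn L w) <= (/2)^L * 1).
  { split; [apply Rmult_le_pos; lra| apply Rmult_le_compat_l; lra]. }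
  lra.
Qed.

Lemma fval_snoc l b : fval (l ++ [b]) = fval l + (if b then (/2)^(S (length l)) else 0).
Proof.
  induction l; simpl.
  - destruct b; simpl; ring.
  - rewrite IHl. destruct b; simpl; ring.
Qed.

Fixpoint gp (y : R) (n : nat) : R :=
  match n with
  | O => 0
  | S n => if Rlt_dec (gp y n + (/2)^(S n)) y then gp y n + (/2)^(S n) else gp y n
  end.
Definition gb (y : R) (n : nat) : bool :=
  if Rlt_dec (gp y n + (/2)^(S n)) y then true else false.

Lemma gp_fval y n : gp y n = fval (map (gb y) (seq 0 n)).
Proof.
  induction n; [reflexivity|].
  rewrite seq_S, map_app. simpl map. rewrite fval_snoc, length_map, length_seq.
  rewrite <- IHn. unfold gb. change (gp y (S n)) with (if Rlt_dec (gp y n + (/2)^(S n)) y then gp y n + (/2)^(S n) else gp y n). destruct Rlt_dec; ring.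
Qed.

Lemma gp_inv y : 0 < y <= 1 -> forall n, gp y n < y <= gp y n + (/2)^n.
Proof.
  intros Hy n; induction n; simpl; [lra|].
  destruct Rlt_dec; simpl in *; lra.
Qed.

Lemma eq_small a : (forall n, Rabs a <= 2 * (/2)^n) -> a = 0.
Proof.
  intros H. destruct (Req_dec a 0) as [|Ha]; auto. exfalso.
  assert (Hp : 0 < Rabs a / 2) by (apply Rdiv_lt_0_compat; [apply Rabs_pos_lt|]; lra).
  destruct (pow_lt_1_zero (/2) ltac:(rewrite Rabs_pos_eq; lra) _ Hp) as [N HN].
  specialize (HN N (le_n _)). specialize (H N).
  rewrite Rabs_pos_eq in HN by (apply Rlt_le, half_pow_pos). lra.
Qed.

Lemma ival_gb y : 0 < y <= 1 -> ival (gb y) = y.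
Proof.
  intros Hy. cut (ival (gb y) - y = 0); [lra|]. apply eq_small. intros n.
  pose proof (ival_prefix_bound n (gb y)). rewrite <- gp_fval in H.
  pose proof (gp_inv y Hy n). apply Rabs_le; lra.
Qed.

Lemma nez_shiftn L w : nez w -> nez (shiftn L w).
Proof.
  intros H n. destruct (H (L + n)%nat) as [m [Hm Hw]].
  exists (m - L)%nat. unfold shiftn. split; [lia|]. replace (L + (m - L))%nat with m by lia; auto.
Qed.

Definition gap (w0 : nat -> bool) (i : nat) : R :=
  Rabs (ival w0 - (fval (map w0 (seq 0 i)) + (/2)^(S i))).

Lemma gap_spec w0 i : nez w0 -> (exists j, (i < j)%nat /\ w0 j = false) ->
  0 < gap w0 i /\
  (forall y, Rabs (y - ival w0) < gap w0 i ->
     (fval (map w0 (seq 0 i)) + (/2)^(S i) < y <-> w0 i = true)).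
Proof.
  intros N [j [Hj Hz]]. unfold gap.
  rewrite (ival_prefix i w0). rewrite (ival_step (shiftn i w0)).
  set (q := fval (map w0 (seq 0 i))).
  assert (E : shiftn i w0 0%nat = w0 i) by (unfold shiftn; f_equal; lia).
  rewrite E. simpl pow. pose proof (half_pow_pos i).
  destruct (w0 i) eqn:Ew.
  - assert (T := ival_pos _ (nez_tl _ (nez_shiftn i _ N))).
    replace (q + (/2)^i * (/2 + /2 * ival (tl (shiftn i w0))) - (q + /2 * (/2)^i))
      with (/2 * (/2)^i * ival (tl (shiftn i w0))) by ring.
    assert (0 < /2 * (/2)^i * ival (tl (shiftn i w0))) by
      (apply Rmult_lt_0_compat; [|auto]; apply Rmult_lt_0_compat; lra).
    rewrite Rabs_pos_eq by lra. split; [lra|].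
    intros y Hy. apply Rabs_def2 in Hy. split; [auto|intros _; nra].
  - assert (T : ival (tl (shiftn i w0)) < 1).
    { apply (ival_lt1 (j - i - 1)). unfold tl, shiftn.
      replace (i + S (j - i - 1))%nat with j by lia; auto. }
    replace (q + (/2)^i * (0 + /2 * ival (tl (shiftn i w0))) - (q + /2 * (/2)^i))
      with (- (/2 * (/2)^i * (1 - ival (tl (shiftn i w0))))) by ring.
    assert (0 < /2 * (/2)^i * (1 - ival (tl (shiftn i w0)))) by
      (apply Rmult_lt_0_compat; [|lra]; apply Rmult_lt_0_compat; lra).
    rewrite Rabs_Ropp, Rabs_pos_eq by lra. split; [lra|].
    intros y Hy. apply Rabs_def2 in Hy. split; [intros; nra|discriminate].
Qed.

Lemma gb_agree w0 L y : nez w0 -> (forall i, exists j, (i < j)%nat /\ w0 j = false) ->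
  0 < y <= 1 -> (forall i, (i < L)%nat -> Rabs (y - ival w0) < gap w0 i) ->
  forall i, (i < L)%nat -> gb y i = w0 i.
Proof.
  intros N Z Hy Hg.
  assert (forall i, (i <= L)%nat -> forall j, (j < i)%nat -> gb y j = w0 j).
  { induction i; intros Hi j Hj; [lia|].
    destruct (Nat.eq_dec j i) as [->|]; [|apply IHi; lia].
    assert (Hq : gp y i = fval (map w0 (seq 0 i))).
    { rewrite gp_fval. f_equal. apply map_ext_in. intros a Ha.
      apply in_seq in Ha. apply IHi; lia. }
    destruct (gap_spec w0 i N (Z i)) as [_ G].
    specialize (G y (Hg i ltac:(lia))). unfold gb. rewrite Hq.
    destruct Rlt_dec as [r|r]; destruct (w0 i) eqn:E; auto; [apply G in r; discriminate | exfalso; apply r, G; reflexivity]. }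
  intros i Hi. apply (H (S i)); lia.
Qed.

Ltac dm2 a := pose proof (Nat.div_mod_eq a 2); pose proof (Nat.mod_upper_bound a 2 ltac:(lia)).

Definition blockword (k : nat) (B : nat -> list bool) : nat -> bool :=
  fun m => nth (m mod k) (B (m / k)%nat) false.

Lemma bw_at k B j i : (i < k)%nat -> blockword k B (j * k + i) = nth i (B j) false.
Proof.
  intros H. unfold blockword.
  rewrite Nat.div_add_l by lia. rewrite (Nat.div_small i k H), Nat.add_0_r.
  rewrite Nat.add_comm, Nat.Div0.mod_add, Nat.mod_small by lia. reflexivity.
Qed.

Lemma bw_div k B m : (1 <= k)%nat -> blockword k B m = nth (m mod k) (B (m / k)%nat) false.
Proof. reflexivity. Qed.

Lemma map_nth_seq_id (l : list bool) : map (fun i => nth i l false) (seq 0 (length l)) = l.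
Proof.
  induction l; [reflexivity|]. simpl. f_equal.
  rewrite <- seq_shift, map_map. simpl. exact IHl.
Qed.

Lemma block_bw k B j : length (B j) = k -> block k (blockword k B) j = B j.
Proof.
  intros H. unfold block.
  rewrite (map_ext_in _ (fun i => nth i (B j) false)).
  - rewrite <- H. apply map_nth_seq_id.
  - intros i Hi. apply in_seq in Hi. apply bw_at. lia.
Qed.

Lemma list_diff (l1 l2 : list bool) : length l1 = length l2 -> l1 <> l2 ->
  exists i, (i < length l1)%nat /\ nth i l1 false <> nth i l2 false.
Proof.
  intros H N. apply NNPP. intro C. apply N. apply (nth_ext _ _ false false H).
  intros i Hi. apply NNPP. intro D. apply C. eauto.
Qed.

Lemma list_one (l : list bool) k : length l = k -> l <> repeat false k ->
  exists i, (i < k)%nat /\ nth i l false = true.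
Proof.
  intros H N. destruct (list_diff l (repeat false k)) as [i [Hi D]].
  - rewrite repeat_length; auto.
  - auto.
  - exists i. split; [lia|]. rewrite nth_repeat in D. destruct (nth i l false); congruence.
Qed.

Definition Bn (weps : list bool) (bs : nat -> list bool) (n j : nat) : list bool :=
  if (j <? n)%nat then weps
  else if ((j - n) mod 2 =? 0)%nat then bs ((j - n) / 2)%nat else weps.

Definition Pc (sigma : list bool -> list bool) (bs : nat -> list bool) (M : nat) :=
  concat (map (fun i => sigma (bs i)) (seq 0 M)).

Lemma concat_Bn sigma weps bs n N : sigma weps = [] ->
  concat (map (fun j => sigma (Bn weps bs n j)) (seq 0 N)) = Pc sigma bs ((N - n + 1) / 2).
Proof.
  intros Hs. induction N.
  - simpl. unfold Pc. replace ((0 - n + 1)/2)%nat with 0%nat; [reflexivity|].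
    replace (0 - n + 1)%nat with 1%nat by lia. reflexivity.
  - rewrite seq_S, map_app, concat_app, IHN. cbn [map concat]. rewrite app_nil_r.
    rewrite Nat.add_0_l. unfold Bn. destruct (Nat.ltb_spec N n).
    + rewrite Hs, app_nil_r. f_equal. dm2 (N - n + 1)%nat. dm2 (S N - n + 1)%nat. lia.
    + destruct (Nat.eqb_spec ((N - n) mod 2) 0).
      * unfold Pc. replace ((S N - n + 1) / 2)%nat with (S ((N - n + 1) / 2)).
        -- rewrite seq_S, map_app, concat_app. cbn [map concat]. rewrite app_nil_r. do 3 f_equal.
           dm2 (N - n)%nat. dm2 (N - n + 1)%nat. lia.
        -- dm2 (N - n)%nat. dm2 (N - n + 1)%nat. dm2 (S N - n + 1)%nat. lia.
      * rewrite Hs, app_nil_r. f_equal. dm2 (N - n)%nat. dm2 (N - n + 1)%nat. dm2 (S N - n + 1)%nat. lia.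
Qed.

Lemma Pc_len sigma bs M : (forall i, sigma (bs i) <> []) -> (M <= length (Pc sigma bs M))%nat.
Proof.
  intros H. induction M; [simpl; lia|]. unfold Pc in *.
  rewrite seq_S, map_app, concat_app, length_app. simpl. rewrite app_nil_r.
  specialize (H M). destruct (sigma (bs M)); [congruence|simpl; lia].
Qed.

Lemma pow_half_le a b : (b <= a)%nat -> (/2)^a <= (/2)^b.
Proof.
  intros H. replace a with (b + (a - b))%nat by lia. rewrite pow_add.
  pose proof (half_pow_pos b). assert ((/2)^(a-b) <= 1).
  { clear. induction (a - b)%nat; simpl; [lra|]. pose proof (half_pow_pos n). nra. } nra.
Qed.

Lemma iper_bw k weps m : length weps = k -> iper weps m = blockword k (fun _ => weps) m.
Proof. intros H; unfold iper, blockword; rewrite H; reflexivity. Qed.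

Lemma Bn_at_bs weps bs n t : Bn weps bs n (n + 2 * t) = bs t.
Proof.
  unfold Bn. destruct (Nat.ltb_spec (n + 2 * t) n); [lia|].
  replace (n + 2 * t - n)%nat with (2 * t)%nat by lia.
  replace ((2 * t) mod 2)%nat with 0%nat by (dm2 (2*t)%nat; lia). rewrite Nat.eqb_refl.
  f_equal. dm2 (2*t)%nat; lia.
Qed.

Lemma Bn_at_weps weps bs n t : Bn weps bs n (n + 2 * t + 1) = weps.
Proof.
  unfold Bn. destruct (Nat.ltb_spec (n + 2 * t + 1) n); [lia|].
  replace (n + 2 * t + 1 - n)%nat with (2 * t + 1)%nat by lia.
  replace ((2 * t + 1) mod 2)%nat with 1%nat by (dm2 (2*t+1)%nat; lia). reflexivity.
Qed.

Lemma Bn_lt weps bs n j : (j < n)%nat -> Bn weps bs n j = weps.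
Proof. intros H; unfold Bn. destruct (Nat.ltb_spec j n); [auto|lia]. Qed.

Section Constr.
Variables (k : nat) (sigma : list bool -> list bool) (weps : list bool)
  (bs : nat -> list bool) (v : nat -> bool) (n : nat).
Hypothesis Hk : (1 <= k)%nat.
Hypothesis HE : erasing_subst k sigma weps.
Hypothesis Hbs : forall i, length (bs i) = k /\ sigma (bs i) <> [].
Hypothesis Hv : forall M, Pc sigma bs M = map v (seq 0 (length (Pc sigma bs M))).

Let W := blockword k (Bn weps bs n).

Lemma Bn_len j : length (Bn weps bs n j) = k.
Proof.
  destruct HE as [Hl _]. unfold Bn.
  destruct (j <? n)%nat; [auto|]. destruct (_ =? _)%nat; [apply Hbs|auto].
Qed.

Lemma bs_ne i : bs i <> weps.
Proof. destruct HE as [_ [Hs _]]. intro E. apply (proj2 (Hbs i)). rewrite E; auto. Qed.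

Lemma W_nez : nez W.
Proof.
  intros N. set (j := (n + 2 * N)%nat).
  destruct (list_eq_dec Bool.bool_dec weps (repeat false k)) as [Ez|Ez].
  - destruct (list_one (bs N) k (proj1 (Hbs N))) as [i [Hi Hi1]].
    { rewrite <- Ez. apply bs_ne. }
    exists (j * k + i)%nat. split; [unfold j; nia|].
    unfold W. rewrite bw_at by auto. unfold j. rewrite Bn_at_bs. auto.
  - destruct (list_one weps k (proj1 HE) Ez) as [i [Hi Hi1]].
    exists ((j + 1) * k + i)%nat. split; [unfold j; nia|].
    unfold W. rewrite bw_at by auto. unfold j. rewrite Bn_at_weps. auto.
Qed.

Lemma W_agree m : (m < n * k)%nat -> W m = iper weps m.
Proof.
  intros H. rewrite (iper_bw k) by apply HE. unfold W, blockword.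
  rewrite Bn_lt; [auto|]. apply Nat.Div0.div_lt_upper_bound. lia.
Qed.

Lemma W_block i : (i < k)%nat -> W (n * k + i) = nth i (bs 0%nat) false.
Proof.
  intros H. unfold W. rewrite bw_at by auto.
  replace (Bn weps bs n n) with (bs 0%nat); [auto|].
  rewrite <- (Bn_at_bs weps bs n 0). f_equal; lia.
Qed.

Lemma W_ne : exists m, W m <> iper weps m.
Proof.
  destruct (list_diff (bs 0%nat) weps) as [i [Hi D]].
  - rewrite (proj1 (Hbs 0%nat)). symmetry; apply HE.
  - apply bs_ne.
  - rewrite (proj1 (Hbs 0%nat)) in Hi. exists (n * k + i)%nat.
    rewrite W_block by auto. rewrite (iper_bw k) by apply HE. rewrite bw_at by auto. auto.
Qed.

Lemma W_subval : sub_val sigma k W = ival v.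
Proof.
  unfold sub_val.
  assert (E : forall N, sub_prefix sigma k W N = Pc sigma bs ((N - n + 1) / 2)).
  { intros N. unfold sub_prefix. rewrite <- (concat_Bn sigma weps bs n N) by apply (proj1 (proj2 HE)).
    f_equal. apply map_ext. intros j. unfold W. rewrite block_bw; auto. apply Bn_len. }
  assert (L : is_lim_seq (fun N => fval (sub_prefix sigma k W N)) (ival v)).
  { apply is_lim_seq_spec. intros eps.
    destruct (pow_lt_1_zero (/2) ltac:(rewrite Rabs_pos_eq; lra) eps (cond_pos eps)) as [N0 HN0].
    exists (n + 2 * N0)%nat. intros N HN. rewrite E.
    set (M := ((N - n + 1) / 2)%nat).
    assert (HM : (N0 <= M)%nat) by (unfold M; dm2 (N - n + 1)%nat; lia).
    rewrite Hv. pose proof (ival_prefix_bound (length (Pc sigma bs M)) v).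
    pose proof (Pc_len sigma bs M (fun i => proj2 (Hbs i))).
    pose proof (pow_half_le (length (Pc sigma bs M)) N0 ltac:(lia)).
    specialize (HN0 N0 (le_n _)). rewrite Rabs_pos_eq in HN0 by (apply Rlt_le, half_pow_pos).
    rewrite Rabs_minus_sym, Rabs_pos_eq by lra. lra. }
  rewrite (is_lim_seq_unique _ _ L). reflexivity.
Qed.

Lemma W_range : 0 < ival W <= 1.
Proof. split; [apply ival_pos, W_nez | apply ival_bounds]. Qed.

Lemma W_f : f_sigma k sigma weps (ival W) = ival v.
Proof.
  unfold f_sigma. match goal with |- context [if ?c then _ else _] => destruct c as [_|C] end.
  - rewrite tilde_eq by apply W_nez. apply W_subval.
  - exfalso. apply C. split; [apply W_range|]. rewrite tilde_eq by apply W_nez.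
    intro E. destruct W_ne as [m Hm]. apply Hm. rewrite E. auto.
Qed.

Lemma W_close : Rabs (ival W - ival (iper weps)) <= (/2)^(n * k).
Proof. apply ival_close. apply W_agree. Qed.

End Constr.

Lemma construct k sigma weps bs v n : (1 <= k)%nat -> erasing_subst k sigma weps ->
  (forall i, length (bs i) = k /\ sigma (bs i) <> []) ->
  (forall M, Pc sigma bs M = map v (seq 0 (length (Pc sigma bs M)))) ->
  let W := blockword k (Bn weps bs n) in
  (0 < ival W <= 1) /\ f_sigma k sigma weps (ival W) = ival v /\
  Rabs (ival W - ival (iper weps)) <= (/2)^(n*k) /\ nez W /\
  (exists m, W m <> iper weps m) /\ (forall m, (m < n*k)%nat -> W m = iper weps m) /\
  (forall i, (i < k)%nat -> W (n*k+i)%nat = nth i (bs 0%nat) false).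
Proof.
  intros Hk HE Hbs Hv W.
  split; [eapply W_range; eauto|].
  split; [eapply W_f; eauto|].
  split; [eapply W_close; eauto|].
  split; [eapply W_nez; eauto|].
  split; [eapply W_ne; eauto|].
  split; [intros; eapply W_agree; eauto|].
  intros; eapply W_block; eauto.
Qed.

Lemma expansion y : 0 <= y <= 1 -> exists v, ival v = y.
Proof.
  intros H. destruct (Req_dec y 0) as [->|Hy].
  - exists (fun _ => false). apply ival_zero; auto.
  - exists (gb y). apply ival_gb. lra.
Qed.


Lemma small_n k eps : (1 <= k)%nat -> 0 < eps -> exists n, (/2)^(n*k) < eps.
Proof.
  intros Hk He. destruct (pow_lt_1_zero (/2) ltac:(rewrite Rabs_pos_eq; lra) eps He) as [N HN].
  exists N. specialize (HN N (le_n _)). rewrite Rabs_pos_eq in HN by (apply Rlt_le, half_pow_pos).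
  pose proof (pow_half_le (N * k) N ltac:(nia)). lra.
Qed.

Lemma first_diff (l1 l2 : list bool) : length l1 = length l2 -> l1 <> l2 ->
  exists j, (j < length l1)%nat /\ (forall i, (i < j)%nat -> nth i l1 false = nth i l2 false) /\
    nth j l1 false <> nth j l2 false.
Proof.
  revert l2; induction l1; intros l2 H N; destruct l2; simpl in *; try congruence; try lia.
  destruct (Bool.bool_dec a b) as [->|D].
  - destruct (IHl1 l2 ltac:(lia) ltac:(congruence)) as [j [Hj [A D]]].
    exists (S j). split; [lia|]. split; auto. intros i Hi. destruct i; auto. apply A; lia.
  - exists 0%nat. split; [lia|]. split; auto. intros; lia.
Qed.

Lemma map_shift (v : nat -> bool) L n : map (fun i => v (L + i)%nat) (seq 0 n) = map v (seq L n).
Proof.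
  induction n; auto. rewrite !seq_S, !map_app, IHn. simpl. reflexivity.
Qed.

Lemma Pc_S sigma bs M : Pc sigma bs (S M) = sigma (bs 0%nat) ++ Pc sigma (fun i => bs (S i)) M.
Proof. unfold Pc. cbn [seq map concat]. f_equal. rewrite <- seq_shift, map_map. reflexivity. Qed.

Fixpoint mg (w0 : nat -> bool) (L : nat) : R :=
  match L with O => ival w0 | S L => Rmin (mg w0 L) (gap w0 L) end.

Lemma mg_spec w0 L : 0 < ival w0 -> (forall i, 0 < gap w0 i) ->
  0 < mg w0 L /\ mg w0 L <= ival w0 /\ forall i, (i < L)%nat -> mg w0 L <= gap w0 i.
Proof.
  intros H0 Hg. induction L; simpl.
  - split; [auto|]. split; [lra|intros; lia].
  - destruct IHL as [A [B C]]. specialize (Hg L).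
    split; [apply Rmin_glb_lt; auto|]. split; [eapply Rle_trans; [apply Rmin_l|auto]|].
    intros i Hi. destruct (Nat.eq_dec i L) as [->|]; [apply Rmin_r|].
    eapply Rle_trans; [apply Rmin_l|]. apply C; lia.
Qed.

Theorem lemma4p9 (k : nat) (sigma : list bool -> list bool) (weps : list bool) :
  (2 <= k)%nat ->
  erasing_subst k sigma weps ->
  weps <> repeat true k ->
  optimal k sigma ->
  almost_fixed_point (f_sigma k sigma weps) (ival (iper weps)).
Proof.
  intros Hk2 HE Hnt Hopt.
  assert (Hk : (1 <= k)%nat) by lia.
  pose proof (ival_bounds (iper weps)) as Hx0.
  destruct (list_eq_dec Bool.bool_dec weps (repeat false k)) as [Ez|Ez].
  -
    assert (X0 : ival (iper weps) = 0).
    { apply ival_zero. intros i. unfold iper. rewrite Ez, nth_repeat. auto. }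
    right. split; [auto|]. exists 1. split; [lra|].
    intros y Hy _ eps Heps.
    destruct (expansion y Hy) as [v Hv].
    destruct (Hopt v) as [bs [Hbs Hpc]].
    destruct (small_n k eps Hk Heps) as [n Hn].
    destruct (construct k sigma weps bs v n Hk HE Hbs Hpc) as [R1 [R2 [R3 _]]].
    exists (ival (blockword k (Bn weps bs n))). rewrite X0 in *.
    split; [lra|]. split; [|congruence].
    assert (H : Rabs (ival (blockword k (Bn weps bs n)) - 0) < eps)
      by (eapply Rle_lt_trans; eauto).
    apply Rabs_def2 in H. lra.
  - set (w0 := iper weps).
    assert (Hw0 : forall m, w0 m = blockword k (fun _ => weps) m) by (intros; apply iper_bw, HE).
    assert (N0 : nez w0).
    { destruct (list_one weps k (proj1 HE) Ez) as [i [Hi H1]].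
      intros N. exists (N * k + i)%nat. split; [nia|]. rewrite Hw0, bw_at; auto. }
    assert (Z0 : forall i, exists j, (i < j)%nat /\ w0 j = false).
    { destruct (list_diff weps (repeat true k)) as [i0 [Hi0 D]].
      - rewrite repeat_length; apply HE.
      - auto.
      - rewrite (proj1 HE) in Hi0.
        rewrite (nth_indep (repeat true k) false true) in D by (rewrite repeat_length; lia).
        rewrite nth_repeat in D. intros i.
        exists ((i + 1) * k + i0)%nat. split; [nia|]. rewrite Hw0, bw_at by auto.
        destruct (nth i0 weps false); congruence. }
    destruct (Hopt w0) as [ds [Hds Hpd]].
    set (c := ds 0%nat).
    assert (Hc : sigma c = map w0 (seq 0 (length (sigma c)))).
    { specialize (Hpd 1%nat). cbn [seq map concat] in Hpd. rewrite app_nil_r in Hpd. exact Hpd. }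
    set (L := length (sigma c)).
    assert (Gp : forall i, 0 < gap w0 i) by (intros i; apply (gap_spec w0 i N0 (Z0 i))).
    destruct (mg_spec w0 L (ival_pos _ N0) Gp) as [D1 [D2 D3]].
    destruct (first_diff c weps) as [j [Hj [Ag Dj]]].
    { unfold c. rewrite (proj1 (Hds 0%nat)). symmetry; apply HE. }
    { intro E. apply (proj2 (Hds 0%nat)). fold c. rewrite E. apply HE. }
    assert (Hck : length c = k) by apply Hds.
    assert (KEY : forall y, 0 <= y <= 1 -> Rabs (y - ival w0) < mg w0 L -> forall eps, 0 < eps ->
      exists x', 0 <= x' <= 1 /\ Rabs (x' - ival w0) < eps /\
        (nth j c false = true -> ival w0 < x') /\ (nth j c false = false -> x' < ival w0) /\
        f_sigma k sigma weps x' = y).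
    { intros y Hy Hyd eps Heps.
      assert (Hy0 : 0 < y <= 1) by (apply Rabs_def2 in Hyd; lra).
      set (v := gb y).
      assert (Hv : ival v = y) by (apply ival_gb; auto).
      assert (Ag0 : forall i, (i < L)%nat -> v i = w0 i).
      { apply gb_agree; auto. intros i Hi. eapply Rlt_le_trans; [exact Hyd|]. apply D3; auto. }
      destruct (Hopt (shiftn L v)) as [bs' [Hbs' Hpc']].
      set (bs := fun i => match i with O => c | S i => bs' i end).
      assert (Hbs : forall i, length (bs i) = k /\ sigma (bs i) <> []).
      { intros [|i]; [apply Hds|apply Hbs']. }
      assert (Hpc : forall M, Pc sigma bs M = map v (seq 0 (length (Pc sigma bs M)))).
      { intros [|M]; [reflexivity|]. rewrite Pc_S. change (bs 0%nat) with c.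
        change (fun i => bs (S i)) with bs'.
        rewrite length_app. fold L. rewrite seq_app, map_app. f_equal.
        - rewrite Hc. fold L. apply map_ext_in. intros a Ha. apply in_seq in Ha.
          symmetry; apply Ag0; lia.
        - rewrite (Hpc' M) at 1. unfold shiftn. rewrite map_shift. reflexivity. }
      destruct (small_n k eps Hk Heps) as [n Hn].
      destruct (construct k sigma weps bs v n Hk HE Hbs Hpc) as [R1 [R2 [R3 [R4 [R5 [R6 R7]]]]]].
      set (W := blockword k (Bn weps bs n)) in *.
      assert (AgW : forall i, (i < n * k + j)%nat -> W i = w0 i).
      { intros i Hi. destruct (Nat.lt_ge_cases i (n * k)) as [Hi'|Hi'].
        - apply R6; auto.
        - replace i with (n * k + (i - n * k))%nat by lia.
          rewrite R7 by lia. rewrite Hw0, bw_at by lia. apply Ag; lia. }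
      assert (Wj : W (n * k + j)%nat = nth j c false) by (apply R7; lia).
      assert (w0j : w0 (n * k + j)%nat = nth j weps false) by (rewrite Hw0, bw_at; auto; lia).
      assert (NE : ival W <> ival w0).
      { destruct R5 as [m Hm]. eapply ival_inj; eauto. }
      exists (ival W). split; [lra|]. split; [eapply Rle_lt_trans; eauto|]. split; [|split; [|congruence]].
      - intros Ec. pose proof (ival_cmp _ W w0 AgW ltac:(congruence)
          ltac:(rewrite w0j; destruct (nth j weps false); congruence)). lra.
      - intros Ec. pose proof (ival_cmp _ w0 W (fun i Hi => eq_sym (AgW i Hi))
          ltac:(rewrite w0j; destruct (nth j weps false); congruence) ltac:(congruence)). lra. }
    destruct (nth j c false) eqn:Ec.
    + right. split; [auto|]. exists (mg w0 L). split; [auto|].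
      intros y Hy Hyd eps Heps. destruct (KEY y Hy Hyd eps Heps) as [x' [A [B [C [_ F]]]]].
      exists x'. specialize (C eq_refl). apply Rabs_def2 in B. split; [auto|]. split; [lra|auto].
    + left. split; [auto|]. exists (mg w0 L). split; [auto|].
      intros y Hy Hyd eps Heps. destruct (KEY y Hy Hyd eps Heps) as [x' [A [B [_ [C F]]]]].
      exists x'. specialize (C eq_refl). apply Rabs_def2 in B. split; [auto|]. split; [lra|auto].
Qed.
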